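(* For any metric space $X$, $\operatorname{tHD}(X)=0$ if and only if there is no Lipschitz map from $X$ onto a non-degenerate closed interval of $\mathbb{R}$.
   Context: For a metric space $X$, the transfinite Hausdorff dimension is $\operatorname{tHD}(X)=\sup\{\operatorname{trind} f(Y): Y\subset X,\ f:Y\to Z \text{ Lipschitz},\ Z \text{ a metric space}\}$, where $\operatorname{trind}$ denotes the transfinite small inductive (topological) dimension. *)

(* Defs.v *)
From Stdlib Require Import Reals Lra.
Open Scope R_scope.

Record MetricSpace := {
  carrier :> Type;
  dist : carrier -> carrier -> R;
  dist_refl : forall x, dist x x = 0;
  dist_eq0 : forall x y, dist x y = 0 -> x = y;
  dist_sym : forall x y, dist x y = dist y x;
  dist_tri : forall x y z, dist x z <= dist x y + dist y z
}.
Arguments dist {m} _ _.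

Lemma Rdist_refl : forall x : R, Rabs (x - x) = 0.
Proof. intros; replace (x - x) with 0 by ring; apply Rabs_R0. Qed.
Lemma Rdist_eq0 : forall x y : R, Rabs (x - y) = 0 -> x = y.
Proof.
  intros x y H. destruct (Req_dec (x - y) 0) as [E|E]; [lra|].
  exfalso; apply (Rabs_no_R0 _ E); exact H.
Qed.
Lemma Rdist_sym : forall x y : R, Rabs (x - y) = Rabs (y - x).
Proof. intros; apply Rabs_minus_sym. Qed.
Lemma Rdist_tri : forall x y z : R, Rabs (x - z) <= Rabs (x - y) + Rabs (y - z).
Proof.
  intros; replace (x - z) with ((x - y) + (y - z)) by ring; apply Rabs_triang.
Qed.
Definition R_metric : MetricSpace :=
  {| carrier := R; dist := fun x y => Rabs (x - y);
     dist_refl := Rdist_refl; dist_eq0 := Rdist_eq0;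
     dist_sym := Rdist_sym; dist_tri := Rdist_tri |}.

Definition subset {T : Type} (A B : T -> Prop) := forall x, A x -> B x.

(* f : X -> Z is Lipschitz on the subset Y of X (only values on Y matter). *)
Definition Lipschitz_on {X Z : MetricSpace} (Y : X -> Prop) (f : X -> Z) : Prop :=
  exists L : R, 0 <= L /\
    forall x y, Y x -> Y y -> dist (f x) (f y) <= L * dist x y.

Definition image {X Z : Type} (Y : X -> Prop) (f : X -> Z) : Z -> Prop :=
  fun z => exists x, Y x /\ f x = z.

Definition rel_open {M : MetricSpace} (S A : M -> Prop) : Prop :=
  subset A S /\
  forall a, A a -> exists eps, 0 < eps /\
    forall s, S s -> dist a s < eps -> A s.

Definition rel_closed {M : MetricSpace} (S A : M -> Prop) : Prop :=
  subset A S /\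
  forall s, S s -> (forall eps, 0 < eps -> exists a, A a /\ dist s a < eps) -> A s.

(* trind S <= 0 (small transfinite inductive dimension of the subspace S),
   unfolded: every point z of S and every open neighbourhood U of z in S
   contain an open V with z in V, V subset U and trind (bd_S V) <= -1,
   i.e. bd_S V = empty, i.e. (V being open) V is also closed in S. *)
Definition trind_le_0 {M : MetricSpace} (S : M -> Prop) : Prop :=
  forall z U, S z -> rel_open S U -> U z ->
    exists V, rel_open S V /\ rel_closed S V /\ V z /\ subset V U.

(* tHD(X) = 0, i.e. sup { trind f(Y) : Y subset X, f : Y -> Z Lipschitz,
   Z metric } = 0.  As trind takes values in {-1} U Ord (trind = -1 exactly
   for the empty space), the supremum equals 0 iff every such f(Y) has
   trind <= 0 and some such f(Y) is nonempty (trind = 0). *)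
Definition tHD_eq_0 (X : MetricSpace) : Prop :=
  (forall (Z : MetricSpace) (Y : X -> Prop) (f : X -> Z),
      Lipschitz_on Y f -> trind_le_0 (image Y f)) /\
  (exists (Z : MetricSpace) (Y : X -> Prop) (f : X -> Z),
      Lipschitz_on Y f /\ exists z, image Y f z).

Definition onto_interval {X : MetricSpace} (f : X -> R_metric) (a b : R) : Prop :=
  a < b /\ (forall x, a <= f x <= b) /\
  (forall t, a <= t <= b -> exists x, f x = t).

(* Main.v *)
Require Import Defs.
From Stdlib Require Import Reals Lra Classical.
Open Scope R_scope.

Lemma Rabs_le_between a b : Rabs a <= b -> - b <= a <= b.
Proof. unfold Rabs; destruct (Rcase_abs a); intros; lra. Qed.

Lemma Rabs_lt' a b : - b < a < b -> Rabs a < b.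
Proof. unfold Rabs; destruct (Rcase_abs a); intros; lra. Qed.

Section McShane.
Variables (X : MetricSpace) (Y : X -> Prop) (g : X -> R) (L : R) (y0 : X).
Hypotheses (HY0 : Y y0) (HL : 0 <= L) (Hg0 : forall y, Y y -> 0 <= g y)
  (Hlip : forall y y', Y y -> Y y' -> Rabs (g y - g y') <= L * Defs.dist y y').

Definition Eset (x : X) : R -> Prop :=
  fun v => exists y, Y y /\ v = -(g y + L * Defs.dist x y).

Lemma Eset_bound x : bound (Eset x).
Proof.
  exists 0. intros v [y [Hy ->]].
  assert (0 <= Defs.dist x y).
  { pose proof (Defs.dist_tri _ x y x). rewrite Defs.dist_refl, (Defs.dist_sym _ y x) in H. lra. }
  pose proof (Hg0 y Hy). pose proof (Rmult_le_pos _ _ HL H). lra.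
Qed.

Lemma Eset_ne x : exists v, Eset x v.
Proof. exists (-(g y0 + L * Defs.dist x y0)). exists y0. auto. Qed.

Definition hM (x : X) : R := - proj1_sig (completeness (Eset x) (Eset_bound x) (Eset_ne x)).

Lemma hM_1 x y : Y y -> hM x <= g y + L * Defs.dist x y.
Proof.
  intro Hy. unfold hM. destruct (completeness _ _ _) as [m [Hm1 Hm2]]; simpl.
  assert (Eset x (-(g y + L * Defs.dist x y))) by (exists y; auto).
  apply Hm1 in H. lra.
Qed.

Lemma hM_2 x m : (forall y, Y y -> m <= g y + L * Defs.dist x y) -> m <= hM x.
Proof.
  intro H. unfold hM. destruct (completeness _ _ _) as [s [Hm1 Hm2]]; simpl.
  assert (s <= - m).
  { apply Hm2. intros v [y [Hy ->]]. specialize (H y Hy). lra. }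
  lra.
Qed.

Lemma hM_eq y : Y y -> hM y = g y.
Proof.
  intro Hy. apply Rle_antisym.
  - pose proof (hM_1 y y Hy). rewrite Defs.dist_refl in H. lra.
  - apply hM_2. intros y' Hy'. pose proof (Hlip y y' Hy Hy').
    apply Rabs_le_between in H. lra.
Qed.

Lemma hM_ge0 x : 0 <= hM x.
Proof.
  apply hM_2. intros y Hy.
  assert (0 <= Defs.dist x y).
  { pose proof (Defs.dist_tri _ x y x). rewrite Defs.dist_refl, (Defs.dist_sym _ y x) in H. lra. }
  pose proof (Hg0 y Hy). pose proof (Rmult_le_pos _ _ HL H). lra.
Qed.

Lemma hM_half x x' : hM x' - L * Defs.dist x x' <= hM x.
Proof.
  apply hM_2. intros y Hy. pose proof (hM_1 x' y Hy).
  pose proof (Defs.dist_tri _ x' x y). rewrite (Defs.dist_sym _ x' x) in H0.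
  pose proof (Rmult_le_compat_l _ _ _ HL H0). lra.
Qed.

Lemma hM_lip x x' : Rabs (hM x - hM x') <= L * Defs.dist x x'.
Proof.
  pose proof (hM_half x x'). pose proof (hM_half x' x).
  rewrite (Defs.dist_sym _ x' x) in H0. apply Rabs_le. lra.
Qed.
End McShane.

Lemma Rmin_lip c a b : Rabs (Rmin c a - Rmin c b) <= Rabs (a - b).
Proof.
  unfold Rmin; destruct (Rle_dec c a); destruct (Rle_dec c b);
  apply Rabs_le;
  unfold Rabs; destruct (Rcase_abs (a - b)); lra.
Qed.

Lemma interval_conn (a b : R) (V : R -> Prop) : a < b -> V a ->
  (forall t, V t -> t < (a+b)/2) ->
  (forall s, a <= s <= b -> (forall eps, 0 < eps -> exists u, V u /\ Rabs (s - u) < eps) -> V s) ->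
  (forall c, V c -> exists eps, 0 < eps /\ forall s, a <= s <= b -> Rabs (c - s) < eps -> V s) ->
  False.
Proof.
  intros Hab Va Hlt Hcl Hop.
  set (W := fun t => a <= t <= b /\ forall u, a <= u <= t -> V u).
  assert (Wa : W a).
  { split; [lra|]. intros u Hu. replace u with a by lra. exact Va. }
  assert (Wb : bound W). { exists b. intros t [Ht _]. lra. }
  destruct (completeness W Wb (ex_intro _ a Wa)) as [c [Hc1 Hc2]].
  assert (Hac : a <= c) by (apply Hc1; exact Wa).
  assert (Hcb : c <= b).
  { apply Hc2. intros t [Ht _]. lra. }
  assert (HA : forall u, a <= u < c -> V u).
  { intros u Hu. destruct (classic (exists w, W w /\ u <= w)) as [[w [[_ Hw] Huw]]|Hn].
    - apply Hw. lra.
    - exfalso. assert (c <= u).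
      { apply Hc2. intros w Hw. destruct (Rle_lt_dec w u); auto.
        exfalso; apply Hn; exists w; split; auto; lra. }
      lra. }
  assert (Vc : V c).
  { destruct (Req_dec c a) as [E|E]; [subst; exact Va|].
    apply Hcl; [lra|]. intros eps Heps.
    exists (Rmax a (c - eps/2)). split.
    - apply HA. unfold Rmax; destruct (Rle_dec a (c - eps/2)); lra.
    - unfold Rmax; destruct (Rle_dec a (c - eps/2)); apply Rabs_lt'; lra. }
  destruct (Hop c Vc) as [e0 [He0 Hs]].
  pose proof (Hlt c Vc).
  assert (Wc' : W (Rmin (c + e0/2) b)).
  { split.
    - unfold Rmin; destruct (Rle_dec (c + e0/2) b); lra.
    - intros u Hu. destruct (Rtotal_order u c) as [H1|[H1|H1]].
      + apply HA; lra.
      + subst; exact Vc.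
      + apply Hs.
        * unfold Rmin in Hu; destruct (Rle_dec (c + e0/2) b); lra.
        * unfold Rmin in Hu; destruct (Rle_dec (c + e0/2) b); apply Rabs_lt'; lra. }
  apply Hc1 in Wc'. unfold Rmin in Wc'; destruct (Rle_dec (c + e0/2) b); lra.
Qed.

Lemma dist_nonneg (M : MetricSpace) (x y : M) : 0 <= Defs.dist x y.
Proof.
  pose proof (Defs.dist_tri _ x y x). rewrite Defs.dist_refl, (Defs.dist_sym _ y x) in H. lra.
Qed.

Theorem lemma4p6 (X : MetricSpace) (Hne : inhabited X) :
  tHD_eq_0 X <->
  ~ (exists (f : X -> R_metric) (a b : R),
       Lipschitz_on (fun _ => True) f /\ onto_interval f a b).
Proof.
  split.
  - intros [H1 _] [f [a [b [Hf [Hab [Hr Hon]]]]]].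
    specialize (H1 R_metric (fun _ => True) f Hf).
    assert (HS : forall t, image (fun _ => True) f t <-> a <= t <= b).
    { intros t; split.
      - intros [x [_ <-]]. apply Hr.
      - intros Ht. destruct (Hon t Ht) as [x Hx]. exists x; auto. }
    set (U := fun t : R_metric => image (fun _ => True) f t /\ t < (a+b)/2).
    assert (HU : rel_open (image (fun _ => True) f) U).
    { split. { intros t [Ht _]; exact Ht. }
      intros t [Ht Hlt]. exists ((a+b)/2 - t). split; [lra|].
      intros s Hs Hd. split; auto. simpl in Hd. apply Rabs_def2 in Hd.
      lra. }
    assert (Sa : image (fun _ => True) f a) by (apply HS; lra).
    destruct (H1 a U Sa HU) as [V [[HVs HVo] [[_ HVc] [Va HVU]]]].
    { split; auto; lra. }
    apply (interval_conn a b V Hab Va).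
    + intros t Vt. apply HVU in Vt. destruct Vt; auto.
    + intros s Hs Happ. apply HVc; [apply HS; exact Hs|].
      intros eps Heps. destruct (Happ eps Heps) as [u [Vu Hu]]. exists u. split; auto.
    + intros c Vc. destruct (HVo c Vc) as [eps [Heps Hb]]. exists eps. split; auto.
      intros s Hs Hd. apply Hb; auto. apply HS; exact Hs.
  - intros Hno. split.
    + intros Z Y f [L [HL Hf]] z U Sz [HUs HUo] Uz.
      destruct Sz as [y0 [Hy0 Hfy0]].
      destruct (HUo z Uz) as [r [Hr Hball]].
      set (g := fun x => Defs.dist (f x) z).
      assert (Hg0 : forall y, Y y -> 0 <= g y) by (intros; apply dist_nonneg).
      assert (Hlip : forall y y', Y y -> Y y' -> Rabs (g y - g y') <= L * Defs.dist y y').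
      { intros y y' Hy Hy'. specialize (Hf y y' Hy Hy'). unfold g. apply Rabs_le.
        pose proof (Defs.dist_tri _ (f y) (f y') z).
        pose proof (Defs.dist_tri _ (f y') (f y) z).
        rewrite (Defs.dist_sym _ (f y') (f y)) in H0. lra. }
      destruct (classic (forall t, 0 <= t <= r/2 -> exists y, Y y /\ g y = t)) as [Hall|Hn].
      * exfalso. apply Hno.
        set (h := hM X Y g L y0 Hy0 HL Hg0).
        exists (fun x => Rmin (r/2) (h x)), 0, (r/2).
        split; [|split; [lra|split]].
        -- exists L. split; auto. intros x x' _ _. simpl.
           eapply Rle_trans; [apply Rmin_lip|]. apply hM_lip.
        -- intros x. pose proof (hM_ge0 X Y g L y0 Hy0 HL Hg0 x). fold h in H.
           unfold Rmin; destruct (Rle_dec (r/2) (h x)); lra.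
        -- intros t Ht. destruct (Hall t Ht) as [y [Hy Hgy]]. exists y.
           unfold h. rewrite (hM_eq X Y g L y0 Hy0 HL Hg0 Hlip y Hy), Hgy.
           unfold Rmin; destruct (Rle_dec (r/2) t); lra.
      * apply not_all_ex_not in Hn. destruct Hn as [t Ht].
        apply imply_to_and in Ht. destruct Ht as [Ht Hnt].
        assert (Ht0 : t <> 0).
        { intro E; subst t. apply Hnt. exists y0. split; auto. unfold g.
          rewrite Hfy0. apply Defs.dist_refl. }
        set (V := fun s => image Y f s /\ Defs.dist s z < t).
        exists V. split; [|split; [|split]].
        -- split. { intros s [Hs _]; exact Hs. }
           intros s [Hs Hd]. exists (t - Defs.dist s z). split; [lra|].
           intros s' Hs' Hd'. split; auto.
           pose proof (Defs.dist_tri _ s' s z). rewrite (Defs.dist_sym _ s' s) in H. lra.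
        -- split. { intros s [Hs _]; exact Hs. }
           intros s Hs Happ. split; auto.
           destruct (Rtotal_order (Defs.dist s z) t) as [H|[H|H]]; auto.
           ++ exfalso. apply Hnt. destruct Hs as [y [Hy Hfy]]. exists y. split; auto.
              unfold g. rewrite Hfy. exact H.
           ++ exfalso. destruct (Happ (Defs.dist s z - t)) as [a [[_ Va] Ha]]; [lra|].
              pose proof (Defs.dist_tri _ s a z). lra.
        -- split. { exists y0; auto. } rewrite Defs.dist_refl. lra.
        -- intros s [Hs Hd]. apply Hball; auto. rewrite Defs.dist_sym. lra.
    + destruct Hne as [x0]. exists X, (fun _ => True), (fun x => x). split.
      * exists 1. split; [lra|]. intros; lra.
      * exists x0, x0; auto.
Qed.
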